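(* Let $k\ge2$ be an even integer. Then the polynomial $\sum_{i=0}^ka^ib^{k-i}-\tfrac12(a^k+b^k)\in\mathbb R[a,b]$ is a sum of squares of polynomials. *)

(* Defs.v *)
From HB Require Import structures.
From mathcomp Require Import all_boot all_order all_algebra.
From mathcomp Require Import reals.
From mathcomp Require Import mpoly.
Set Implicit Arguments. Unset Strict Implicit. Unset Printing Implicit Defensive.
Import GRing.Theory Num.Theory.
Local Open Scope ring_scope.

Definition binom_sum_poly (R : realType) (k : nat) : {mpoly R[2]} :=
  \sum_(i < k.+1) ('X_0 ^+ i * 'X_1 ^+ (k - i))
  - 2%:R^-1 *: ('X_0 ^+ k + 'X_1 ^+ k).

Definition is_sos (R : realType) (p : {mpoly R[2]}) : Prop :=
  exists s : seq {mpoly R[2]}, p = \sum_(q <- s) q ^+ 2.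

(* Main.v *)
Require Import Defs.
From HB Require Import structures.
From mathcomp Require Import all_boot all_order all_algebra.
From mathcomp Require Import reals.
From mathcomp Require Import mpoly.
From mathcomp Require Import ring zify.
Set Implicit Arguments. Unset Strict Implicit. Unset Printing Implicit Defensive.
Import GRing.Theory Num.Theory.
Local Open Scope ring_scope.

Lemma key (T : comRingType) (x y : T) (m : nat) :
  2%:R * (\sum_(i < (2 * m).+1) x^+i * y^+(2 * m - i)) - x^+(2 * m) - y^+(2 * m)
  = (x+y)^+2 * \sum_(j < m) (x^+j * y^+(m.-1 - j))^+2.
Proof.
elim: m => [|m IH].
  by rewrite big_ord1 big_ord0 /= !expr0; ring.
have E : (2 * m.+1 = (2 * m).+2)%N by lia.
rewrite E big_ord_recr /= big_ord_recr /= (big_ord_recr m) /=.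
rewrite (eq_bigr (fun i : 'I_(2 * m).+1 => y^+2 * (x^+i * y^+(2 * m - i)))); last first.
  move=> i _ /=.
  have Hi := ltn_ord i.
  have -> : ((2 * m).+2 - i = (2 * m - i) + 2)%N by lia.
  by rewrite exprD; ring.
rewrite -big_distrr /=.

rewrite (eq_bigr (fun i : 'I_m => y^+2 * (x^+i * y^+(m.-1 - i))^+2)); last first.
  move=> i _ /=.
  have Hi := ltn_ord i.
  have -> : (m - i = (m.-1 - i) + 1)%N by lia.
  by rewrite exprD; ring.
rewrite -big_distrr /=.
rewrite subnn expr0 mulr1 subSnn subnn expr0 mulr1 expr1 (exprS x (2 * m).+1) (exprS x (2 * m)) (exprS y (2 * m).+1) (exprS y (2 * m)).
have Ex : x ^+ (2 * m) = (x ^+ m) ^+ 2 by rewrite -exprM mulnC.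
move: IH; set A := \sum_(i < _) _; set B := \sum_(j < m) _ => IH.
rewrite -Ex.
have -> : (x + y) ^+ 2 * (y ^+ 2 * B + x ^+ (2 * m)) = y^+2 * ((x+y)^+2 * B) + (x+y)^+2 * x ^+ (2 * m) by ring.
rewrite -IH; ring.
Qed.
Theorem mainTheorem16 (R : realType) (k : nat) :
  (2 <= k)%N -> ~~ odd k -> is_sos (binom_sum_poly R k).
Proof.
move=> k2 ek.
have [m Hm] : exists m, k = (2 * m)%N by exists k./2; rewrite -{1}(odd_double_half k) (negbTE ek) add0n -mul2n.
set c : R := Num.sqrt (2^-1).
set x : {mpoly R[2]} := 'X_0; set y : {mpoly R[2]} := 'X_1.
exists [seq c *: ((x + y) * (x ^+ j * y ^+ (m.-1 - j))) | j : 'I_m <- enum 'I_m].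
rewrite big_map big_enum /binom_sum_poly -/x -/y Hm.
have hc : c ^+ 2 = 2^-1 by rewrite sqr_sqrtr // invr_ge0 ler0n.
have h2 : (2^-1 : R)%:A * 2%:R = 1 :> {mpoly R[2]}.
  by rewrite -(rmorph_nat (in_alg {mpoly R[2]})) -[(2^-1 : R)%:A]/(in_alg {mpoly R[2]} 2^-1) -rmorphM /= mulVf ?rmorph1 ?scale1r // pnatr_eq0.
under eq_bigr => j _ do rewrite exprZn hc -mulr_algl exprMn.
rewrite -big_distrr -big_distrr /= -(key x y m).
rewrite -[2^-1 *: (_ + _)]mulr_algl.
move: h2; set A := \sum_(i < _) _; set h := (2^-1 : R)%:A => h2.
rewrite [in RHS]mulrBr [in RHS]mulrBr mulrA h2 mul1r.
ring.
Qed.
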